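(* The number of $M$-equivalence classes of vertices of $\mathcal H$ (i.e. the maximal number of pairwise $M$-distinct vertices of $\mathcal H$) is exactly $5\cdot 4^{n-1}-2^{n+2}+4$, which equals the number of admissible signatures $|S|$.
   Context: Let $n\ge 1$, $[n]=\{0,\dots,n-1\}$, and real numbers $\gamma_0<\dots<\gamma_{n-1}$. For $\mathbf v=(v_{ydz})_{y\in[n],d,z\in\{0,1\}}\in\mathbb R^{4n}$ define $(M\mathbf v)_{(i,j,d_0,d_1)}=\sum_{z:d_z=0}v_{i0z}+\sum_{z:d_z=1}v_{j1z}$ for $i,j\in[n]$, $(d_0,d_1)\in\{0,1\}^2$, and $c_{(i,j,d_0,d_1)}=\gamma_j-\gamma_i$; $\mathcal H=\{\mathbf v:M\mathbf v\le\mathbf c\}$. Vectors $\mathbf v_1,\mathbf v_2$ are $M$-equivalent if $M\mathbf v_1=M\mathbf v_2$, $M$-distinct otherwise. $\mathbf v\in\mathcal H$ is a vertex if any representation $\mathbf v=\lambda\mathbf v_1+(1-\lambda)\mathbf v_2$, $\lambda\in(0,1)$, $\mathbf v_1,\mathbf v_2\in\mathcal H$, forces $M\mathbf v_1=M\mathbf v_2=M\mathbf v$. $S=S_1\cup S_2\cup S_3\subseteq\{0,1\}^{n\times2\times2}$, where: $\mathbf B\in S_1$ iff some $t\in\{0,\dots,n-2\}$ has $B_{i00}=B_{i01}=1$ for $i\ge t$ and $B_{i00}\ne B_{i01}$ for $i<t$, $B_{i10}\ne B_{i11}$ for all $i$, and some $i,j$ have $B_{i10}=B_{j11}=1$; $\mathbf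 B\in S_2$ iff $B_{(n-1)00}=B_{(n-1)01}=B_{010}=B_{011}=1$, $B_{i00}\ne B_{i01}$ for $i<n-1$, $B_{j10}\ne B_{j11}$ for $j>0$; $\mathbf B\in S_3$ iff some $t\in\{1,\dots,n-1\}$ has $B_{i10}=B_{i11}=1$ for $i\le t$ and $B_{i10}\ne B_{i11}$ for $i>t$, $B_{i00}\ne B_{i01}$ for all $i$, and some $i,j$ have $B_{i00}=B_{j01}=1$. *)

(* Defs.v *)
From HB Require Import structures.
From mathcomp Require Import all_boot all_order all_algebra.
From mathcomp Require Import reals.
Set Implicit Arguments. Unset Strict Implicit. Unset Printing Implicit Defensive.
Import Order.TTheory GRing.Theory Num.Theory.
Local Open Scope ring_scope.

(* Bits {0,1} are encoded as bool: false = 0, true = 1. *)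

(* A vector v in R^{4n}, indexed v y d z with y : 'I_n, d z : bool. *)
Definition vec (R : realType) (n : nat) := 'I_n -> bool -> bool -> R.

(* (M v)_(i,j,d0,d1) = sum_{z : d_z = 0} v_{i0z} + sum_{z : d_z = 1} v_{j1z} *)
Definition Mv (R : realType) (n : nat) (v : vec R n)
    (i j : 'I_n) (d0 d1 : bool) : R :=
  (if d0 then v j true false else v i false false) +
  (if d1 then v j true true else v i false true).

Definition inH (R : realType) (n : nat) (gamma : 'I_n -> R) (v : vec R n) : Prop :=
  forall (i j : 'I_n) (d0 d1 : bool), Mv v i j d0 d1 <= gamma j - gamma i.

Definition Mequiv (R : realType) (n : nat) (v1 v2 : vec R n) : Prop :=
  forall (i j : 'I_n) (d0 d1 : bool), Mv v1 i j d0 d1 = Mv v2 i j d0 d1.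

Definition is_vertex (R : realType) (n : nat) (gamma : 'I_n -> R) (v : vec R n) : Prop :=
  inH gamma v /\
  forall (lam : R) (v1 v2 : vec R n),
    0 < lam -> lam < 1 -> inH gamma v1 -> inH gamma v2 ->
    (forall y d z, v y d z = lam * v1 y d z + (1 - lam) * v2 y d z) ->
    Mequiv v1 v /\ Mequiv v2 v.

Definition num_vertex_classes_is (R : realType) (n : nat) (gamma : 'I_n -> R)
    (N : nat) : Prop :=
  (exists vs : 'I_N -> vec R n,
      (forall k, is_vertex gamma (vs k)) /\
      (forall k l, k <> l -> ~ Mequiv (vs k) (vs l))) /\
  (forall (m : nat) (ws : 'I_m -> vec R n),
      (forall k, is_vertex gamma (ws k)) ->
      (forall k l, k <> l -> ~ Mequiv (ws k) (ws l)) ->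
      (m <= N)%N).

(* Signatures B in {0,1}^{n x 2 x 2}, B (i, d, z) = B_{idz}. *)
Definition sig_t (n : nat) := {ffun 'I_n * bool * bool -> bool}.

Definition inS1 (n : nat) (B : sig_t n) : bool :=
  [exists t : 'I_n,
     [&& (t.+1 < n)%N,
         [forall i : 'I_n,
            ((t <= i)%N ==> (B (i, false, false) && B (i, false, true))) &&
            ((i < t)%N ==> (B (i, false, false) != B (i, false, true)))],
         [forall i : 'I_n, B (i, true, false) != B (i, true, true)] &
         [exists i : 'I_n, exists j : 'I_n, B (i, true, false) && B (j, true, true)]]].

Definition inS2 (n : nat) (B : sig_t n) : bool :=
  [forall i : 'I_n,
     [&& ((i.+1 == n) ==> (B (i, false, false) && B (i, false, true))),
         ((i.+1 < n)%N ==> (B (i, false, false) != B (i, false, true))),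
         ((val i == 0%N) ==> (B (i, true, false) && B (i, true, true))) &
         ((0 < i)%N ==> (B (i, true, false) != B (i, true, true)))]].

Definition inS3 (n : nat) (B : sig_t n) : bool :=
  [exists t : 'I_n,
     [&& (0 < t)%N,
         [forall i : 'I_n,
            ((i <= t)%N ==> (B (i, true, false) && B (i, true, true))) &&
            ((t < i)%N ==> (B (i, true, false) != B (i, true, true)))],
         [forall i : 'I_n, B (i, false, false) != B (i, false, true)] &
         [exists i : 'I_n, exists j : 'I_n, B (i, false, false) && B (j, false, true)]]].

Definition S (n : nat) : {set sig_t n} :=
  [set B | [|| inS1 B, inS2 B | inS3 B]].

(* Main.v *)
Require Import Defs.
From HB Require Import structures.
From mathcomp Require Import all_boot all_order all_algebra.
From mathcomp Require Import reals.
From mathcomp Require Import ring lra zify.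
Import Order.TTheory GRing.Theory Num.Theory.
Local Open Scope ring_scope.
Set Implicit Arguments. Unset Strict Implicit. Unset Printing Implicit Defensive.

Lemma fin_min (R : realType) (T : finType) (f : T -> R) :
  exists2 d, 0 < d & forall x, 0 < f x -> d <= f x.
Proof.
suff: forall s : seq T, exists2 d, 0 < d & forall x, x \in s -> 0 < f x -> d <= f x.
  case/(_ (enum T)) => d d0 H; exists d => // x; apply: H; by rewrite mem_enum.
elim=> [|a s [d d0 IH]]; first by exists 1.
case: (ltrP 0 (f a)) => ha.
- exists (Num.min d (f a)); first by rewrite lt_min d0 ha.
  move=> x; rewrite inE => /orP [/eqP -> _| xs fx]; first by rewrite ge_min lexx orbT.
  by rewrite ge_min IH.
- exists d => // x; rewrite inE => /orP [/eqP -> fx|]; last exact: IH.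
  by rewrite ltNge ha in fx.
Qed.

Section Vert.
Variables (R : realType) (m : nat) (gamma : 'I_m.+1 -> R).
Hypothesis gmono : forall i j : 'I_m.+1, (i < j)%N -> gamma i < gamma j.
Local Notation N := m.+1.
Implicit Types (v w : vec R N) (i j : 'I_N).

Lemma le_g i j : (i <= j)%N -> gamma i <= gamma j.
Proof. rewrite leq_eqVlt => /orP [/eqP/val_inj -> //| /gmono /ltW //]. Qed.
Lemma g_lt i j : gamma i < gamma j -> (i < j)%N.
Proof. by case: (ltnP i j) => // /le_g; rewrite leNgt => /negbTE ->. Qed.
Lemma g_le i j : gamma i <= gamma j -> (i <= j)%N.
Proof. by case: (leqP i j) => // /gmono; rewrite ltNge => /negbTE ->. Qed.
Lemma g0 i : gamma ord0 <= gamma i. Proof. exact: le_g. Qed.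
Lemma gmax i : gamma i <= gamma ord_max. Proof. by apply: le_g; rewrite -ltnS. Qed.

Definition al i := gamma ord0 + gamma i.
Definition be j := - gamma j - gamma ord_max.
Definition X v i := v i false false + gamma i.
Definition W v i := - v i false true - gamma i.
Definition Z v j := v j true false - gamma j.
Definition Y v j := gamma j - v j true true.

Lemma Mv01 v i j : Mv v i j false true = X v i - Y v j + (gamma j - gamma i).
Proof. rewrite /Mv /X /Y /=; ring. Qed.
Lemma Mv10 v i j : Mv v i j true false = Z v j - W v i + (gamma j - gamma i).
Proof. rewrite /Mv /Z /W /=; ring. Qed.
Lemma Mv00 v i j : Mv v i j false false = X v i - W v i - 2 * gamma i.
Proof. rewrite /Mv /X /W /=; ring. Qed.
Lemma Mv11 v i j : Mv v i j true true = Z v j - Y v j + 2 * gamma j.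
Proof. rewrite /Mv /Z /Y /=; ring. Qed.

Lemma HXY v i j : inH gamma v -> X v i <= Y v j.
Proof. move/(_ i j false true); rewrite Mv01; lra. Qed.
Lemma HZW v i j : inH gamma v -> Z v j <= W v i.
Proof. move/(_ i j true false); rewrite Mv10; lra. Qed.
Lemma HXW v i : inH gamma v -> X v i <= W v i + al i.
Proof. move/(_ i ord0 false false); rewrite Mv00 /al; lra. Qed.
Lemma HZY v j : inH gamma v -> Z v j <= Y v j + be j.
Proof. move/(_ ord_max j true true); rewrite Mv11 /be; lra. Qed.

Lemma inH_of v : (forall i j, X v i <= Y v j) -> (forall i j, Z v j <= W v i) ->
  (forall i, X v i <= W v i + al i) -> (forall j, Z v j <= Y v j + be j) -> inH gamma v.
Proof.
move=> h1 h2 h3 h4 i j [] [].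
- have := h4 j; have := gmax i; rewrite Mv11 /be; lra.
- have := h2 i j; rewrite Mv10; lra.
- have := h1 i j; rewrite Mv01; lra.
- have := h3 i; have := g0 j; rewrite Mv00 /al; lra.
Qed.

Lemma T00 v i j : inH gamma v -> Mv v i j false false = gamma j - gamma i ->
  X v i = W v i + al i.
Proof.
move=> vH; have := HXW i vH; have := g0 j; rewrite Mv00 /al; lra.
Qed.
Lemma T11 v i j : inH gamma v -> Mv v i j true true = gamma j - gamma i ->
  Z v j = Y v j + be j.
Proof.
move=> vH; have := HZY j vH; have := gmax i; rewrite Mv11 /be; lra.
Qed.

Definition Kn1 (K : 'I_N -> bool -> bool -> bool) i j (d0 : bool) :=
  if d0 then K j true false else K i false false.
Definition Kn2 (K : 'I_N -> bool -> bool -> bool) i j (d1 : bool) :=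
  if d1 then K j true true else K i false true.

Lemma cut v K : is_vertex gamma v ->
  (forall i j d0 d1, Mv v i j d0 d1 = gamma j - gamma i -> Kn1 K i j d0 = Kn2 K i j d1) ->
  forall i j d0 d1, Kn1 K i j d0 = Kn2 K i j d1.
Proof.
case=> vH vV hK.
have [d d0 dmin] := fin_min (fun c : ('I_N * 'I_N * bool * bool)%type =>
   let: (i,j,d0,d1) := c in gamma j - gamma i - Mv v i j d0 d1).
pose u y (dd z : bool) := if K y dd z then (if z then - d else d) else 0.
pose v1 y dd z := v y dd z + u y dd z.
pose v2 y dd z := v y dd z - u y dd z.
have Mu1 i j d0' d1 : Mv v1 i j d0' d1 =
   Mv v i j d0' d1 + ((Kn1 K i j d0')%:R - (Kn2 K i j d1)%:R) * d.
  rewrite /Mv /v1 /u /Kn1 /Kn2.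
  by case: d0'; case: d1; do 2 case: (K _ _ _); rewrite /=; ring.
have Mu2 i j d0' d1 : Mv v2 i j d0' d1 =
   Mv v i j d0' d1 - ((Kn1 K i j d0')%:R - (Kn2 K i j d1)%:R) * d.
  rewrite /Mv /v2 /u /Kn1 /Kn2.
  by case: d0'; case: d1; do 2 case: (K _ _ _); rewrite /=; ring.
have key i j d0' d1 : Kn1 K i j d0' != Kn2 K i j d1 ->
    d <= gamma j - gamma i - Mv v i j d0' d1.
  move=> ne; apply: (dmin (i,j,d0',d1)).
  rewrite /= subr_gt0 lt_neqAle vH andbT; apply/eqP => eq.
  by rewrite (hK _ _ _ _ eq) eqxx in ne.
have H1 : inH gamma v1.
  move=> i j d0' d1; rewrite Mu1; move: (key i j d0' d1) (vH i j d0' d1).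
  case: (Kn1 K i j d0'); case: (Kn2 K i j d1) => /= k h.
  - lra.
  - have := k isT; lra.
  - have := k isT; lra.
  - lra.
have H2 : inH gamma v2.
  move=> i j d0' d1; rewrite Mu2; move: (key i j d0' d1) (vH i j d0' d1).
  case: (Kn1 K i j d0'); case: (Kn2 K i j d1) => /= k h.
  - lra.
  - have := k isT; lra.
  - have := k isT; lra.
  - lra.
have [] := vV (2^-1) v1 v2 _ _ H1 H2.
- by rewrite invr_gt0.
- by rewrite invf_lt1 // ltr1n.
- by move=> y dd z; rewrite /v1 /v2; field.
move=> E1 _ i j d0' d1; have := E1 i j d0' d1; rewrite Mu1.
case: (Kn1 K i j d0'); case: (Kn2 K i j d1) => //= h; lra.
Qed.


Definition b00 (B : sig_t N) i := B (i, false, false).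
Definition b01 (B : sig_t N) i := B (i, false, true).
Definition b10 (B : sig_t N) j := B (j, true, false).
Definition b11 (B : sig_t N) j := B (j, true, true).

Definition t01 v i j := Mv v i j false true == gamma j - gamma i.
Definition t10 v i j := Mv v i j true false == gamma j - gamma i.

Definition sigv v : sig_t N := [ffun x : 'I_N * bool * bool =>
  let: (y, d, z) := x in
  if d then (if z then [exists i, t01 v i y] else [exists i, t10 v i y])
  else (if z then [exists j, t10 v y j] else [exists j, t01 v y j])].

Lemma t01E v i j : t01 v i j = (X v i == Y v j).
Proof. by rewrite /t01 Mv01; apply/eqP/eqP => h; lra. Qed.
Lemma t10E v i j : t10 v i j = (W v i == Z v j).
Proof. by rewrite /t10 Mv10; apply/eqP/eqP => h; lra. Qed.

Lemma sig00E v i : b00 (sigv v) i = [exists j, X v i == Y v j].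
Proof. by rewrite /b00 ffunE; apply: eq_existsb => j; rewrite t01E. Qed.
Lemma sig11E v j : b11 (sigv v) j = [exists i, X v i == Y v j].
Proof. by rewrite /b11 ffunE; apply: eq_existsb => i; rewrite t01E. Qed.
Lemma sig01E v i : b01 (sigv v) i = [exists j, W v i == Z v j].
Proof. by rewrite /b01 ffunE; apply: eq_existsb => j; rewrite t10E. Qed.
Lemma sig10E v j : b10 (sigv v) j = [exists i, W v i == Z v j].
Proof. by rewrite /b10 ffunE; apply: eq_existsb => i; rewrite t10E. Qed.

Lemma sigv_equiv v w : Mequiv v w -> sigv v = sigv w.
Proof.
move=> E; apply/ffunP => [[[y d] z]]; rewrite !ffunE.
by case: d; case: z; apply: eq_existsb => k; rewrite /t01 /t10 E.
Qed.

Lemma feas1 v i j : inH gamma v -> b00 (sigv v) i -> b11 (sigv v) j -> X v i = Y v j.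
Proof.
move=> vH; rewrite sig00E sig11E => /existsP [j' /eqP e1] /existsP [i' /eqP e2].
have := HXY i j vH; have := HXY i' j' vH; lra.
Qed.
Lemma feas2 v i j : inH gamma v -> b01 (sigv v) i -> b10 (sigv v) j -> W v i = Z v j.
Proof.
move=> vH; rewrite sig01E sig10E => /existsP [j' /eqP e1] /existsP [i' /eqP e2].
have := HZW i j vH; have := HZW i' j' vH; lra.
Qed.

Lemma cutT v (K : 'I_N -> bool -> bool -> bool) : is_vertex gamma v ->
  (forall i j, X v i = Y v j -> K i false false = K j true true) ->
  (forall i j, W v i = Z v j -> K j true false = K i false true) ->
  (forall i, X v i = W v i + al i -> K i false false = K i false true) ->
  (forall j, Z v j = Y v j + be j -> K j true false = K j true true) ->
  forall i j d0 d1, Kn1 K i j d0 = Kn2 K i j d1.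
Proof.
move=> vV h1 h2 h3 h4; apply: (cut vV) => i j [] [] t; rewrite /Kn1 /Kn2.
- by apply: h4; apply: (T11 vV.1 t).
- by apply: h2; move: t; rewrite Mv10; lra.
- by apply: h1; move: t; rewrite Mv01; lra.
- by apply: h3; apply: (T00 vV.1 t).
Qed.

Ltac kcase x y := case: (eqVneq x y) => [?|?]; [subst x|]; rewrite /= ?andbF ?andbT ?andbF //.

Lemma vBm0 v i : is_vertex gamma v -> b00 (sigv v) i || b01 (sigv v) i.
Proof.
move=> vV; apply: contraT => /norP [n0 n1].
pose K y (d z : bool) := (y == i) && ~~ d.
suff C : forall i0 j0 d0 d1, Kn1 K i0 j0 d0 = Kn2 K i0 j0 d1.
  by have := C i i false true; rewrite /Kn1 /Kn2 /K /= eqxx.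
apply: cutT vV _ _ _ _ => [i' j e|i' j e|i' e|j' e]; rewrite /K /= ?andbF ?andbT //.
- kcase i' i; by move: n0; rewrite sig00E => /existsP; case; exists j; apply/eqP.
- kcase i' i; by move: n1; rewrite sig01E => /existsP; case; exists j; apply/eqP.
Qed.

Lemma vBm1 v j : is_vertex gamma v -> b10 (sigv v) j || b11 (sigv v) j.
Proof.
move=> vV; apply: contraT => /norP [n0 n1].
pose K y (d z : bool) := (y == j) && d.
suff C : forall i0 j0 d0 d1, Kn1 K i0 j0 d0 = Kn2 K i0 j0 d1.
  by have := C j j false true; rewrite /Kn1 /Kn2 /K /= eqxx.
apply: cutT vV _ _ _ _ => [i j' e|i j' e|i' e|j' e]; rewrite /K /= ?andbF ?andbT //.
- kcase j' j; by move: n1; rewrite sig11E => /existsP; case; exists i; apply/eqP.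
- kcase j' j; by move: n0; rewrite sig10E => /existsP; case; exists i; apply/eqP.
Qed.

Lemma vT3 v i : is_vertex gamma v -> ~~ (b00 (sigv v) i && b01 (sigv v) i) ->
  X v i = W v i + al i.
Proof.
move=> vV; case/nandP => nb; apply/eqP; apply: contraT => nT.
- pose K y (d z : bool) := (y == i) && ~~ d && ~~ z.
  suff C : forall i0 j0 d0 d1, Kn1 K i0 j0 d0 = Kn2 K i0 j0 d1.
    by have := C i i false true; rewrite /Kn1 /Kn2 /K /= eqxx.
  apply: cutT vV _ _ _ _ => [i' j e|i' j e|i' e|j' e]; rewrite /K /= ?andbF ?andbT //.
  + kcase i' i; by move: nb; rewrite sig00E => /existsP; case; exists j; apply/eqP.
  + kcase i' i; by move: nT; rewrite e eqxx.
- pose K y (d z : bool) := (y == i) && ~~ d && z.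
  suff C : forall i0 j0 d0 d1, Kn1 K i0 j0 d0 = Kn2 K i0 j0 d1.
    by have := C i i false false; rewrite /Kn1 /Kn2 /K /= eqxx.
  apply: cutT vV _ _ _ _ => [i' j e|i' j e|i' e|j' e]; rewrite /K /= ?andbF ?andbT //.
  + kcase i' i; by move: nb; rewrite sig01E => /existsP; case; exists j; apply/eqP.
  + kcase i' i; by move: nT; rewrite e eqxx.
Qed.

Lemma vT4 v j : is_vertex gamma v -> ~~ (b10 (sigv v) j && b11 (sigv v) j) ->
  Z v j = Y v j + be j.
Proof.
move=> vV; case/nandP => nb; apply/eqP; apply: contraT => nT.
- pose K y (d z : bool) := (y == j) && d && ~~ z.
  suff C : forall i0 j0 d0 d1, Kn1 K i0 j0 d0 = Kn2 K i0 j0 d1.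
    by have := C j j true true; rewrite /Kn1 /Kn2 /K /= eqxx.
  apply: cutT vV _ _ _ _ => [i j' e|i j' e|i' e|j' e]; rewrite /K /= ?andbF ?andbT //.
  + kcase j' j; by move: nb; rewrite sig10E => /existsP; case; exists i; apply/eqP.
  + kcase j' j; by move: nT; rewrite e eqxx.
- pose K y (d z : bool) := (y == j) && d && z.
  suff C : forall i0 j0 d0 d1, Kn1 K i0 j0 d0 = Kn2 K i0 j0 d1.
    by have := C j j true true; rewrite /Kn1 /Kn2 /K /= eqxx.
  apply: cutT vV _ _ _ _ => [i j' e|i j' e|i' e|j' e]; rewrite /K /= ?andbF ?andbT //.
  + kcase j' j; by move: nb; rewrite sig11E => /existsP; case; exists i; apply/eqP.
  + kcase j' j; by move: nT; rewrite e eqxx.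
Qed.

Lemma vE1 v : is_vertex gamma v -> exists i, b00 (sigv v) i.
Proof.
move=> vV; case: (boolP [exists i, b00 (sigv v) i]) => [/existsP //|/existsPn n0].
have n1 j : ~~ b11 (sigv v) j.
  apply/negP; rewrite sig11E => /existsP [i e]; have := n0 i; rewrite sig00E.
  by move/existsPn/(_ j); rewrite e.
have b1 i : b01 (sigv v) i by have := vBm0 i vV; rewrite (negbTE (n0 i)).
have b2 j : b10 (sigv v) j by have := vBm1 j vV; rewrite (negbTE (n1 j)) orbF.
have t3 : X v ord_max = W v ord_max + al ord_max by apply: vT3 => //; rewrite (negbTE (n0 _)).
have t4 : Z v ord0 = Y v ord0 + be ord0 by apply: vT4 => //; rewrite (negbTE (n1 _)) andbF.
have f2 := feas2 vV.1 (b1 ord_max) (b2 ord0).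
have := n0 ord_max; rewrite sig00E => /existsPn/(_ ord0); move/negP => HH; exfalso; apply: HH.
apply/eqP; move: t3 t4 f2; rewrite /al /be; lra.
Qed.

Lemma vE2 v : is_vertex gamma v -> exists i, b01 (sigv v) i.
Proof.
move=> vV; case: (boolP [exists i, b01 (sigv v) i]) => [/existsP //|/existsPn n0].
have n1 j : ~~ b10 (sigv v) j.
  apply/negP; rewrite sig10E => /existsP [i e]; have := n0 i; rewrite sig01E.
  by move/existsPn/(_ j); rewrite e.
have b1 i : b00 (sigv v) i by have := vBm0 i vV; rewrite (negbTE (n0 i)) orbF.
have b2 j : b11 (sigv v) j by have := vBm1 j vV; rewrite (negbTE (n1 j)).
have t3 : X v ord_max = W v ord_max + al ord_max by apply: vT3 => //; rewrite (negbTE (n0 _)) andbF.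
have t4 : Z v ord0 = Y v ord0 + be ord0 by apply: vT4 => //; rewrite (negbTE (n1 _)).
have f1 := feas1 vV.1 (b1 ord_max) (b2 ord0).
have := n0 ord_max; rewrite sig01E => /existsPn/(_ ord0); move/negP => HH; exfalso; apply: HH.
apply/eqP; move: t3 t4 f1; rewrite /al /be; lra.
Qed.

Lemma b00_b11 v : (exists i, b00 (sigv v) i) -> exists j, b11 (sigv v) j.
Proof.
case=> i; rewrite sig00E => /existsP [j e]; exists j; rewrite sig11E.
by apply/existsP; exists i.
Qed.
Lemma b01_b10 v : (exists i, b01 (sigv v) i) -> exists j, b10 (sigv v) j.
Proof.
case=> i; rewrite sig01E => /existsP [j e]; exists j; rewrite sig10E.
by apply/existsP; exists i.
Qed.

Lemma vconn v : is_vertex gamma v ->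
  (exists i, [/\ b00 (sigv v) i, b01 (sigv v) i & X v i = W v i + al i]) \/
  (exists j, [/\ b10 (sigv v) j, b11 (sigv v) j & Z v j = Y v j + be j]).
Proof.
move=> vV; set B := sigv v.
case: (boolP [exists i, [&& b00 B i, b01 B i & X v i == W v i + al i]]).
  by case/existsP => i /and3P [h1 h2 /eqP h3]; left; exists i.
move/existsPn => nI.
case: (boolP [exists j, [&& b10 B j, b11 B j & Z v j == Y v j + be j]]).
  by case/existsP => j /and3P [h1 h2 /eqP h3]; right; exists j.
move/existsPn => nJ; exfalso.
pose K y (d z : bool) := if d then (if z then b11 B y else b11 B y && ~~ b10 B y)
  else (if z then b00 B y && ~~ b01 B y else b00 B y).
have [i1 e1] := vE1 vV; have [i2 e2] := vE2 vV; have [j2 e3] := b01_b10 (vE2 vV).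
suff C : forall i0 j0 d0 d1, Kn1 K i0 j0 d0 = Kn2 K i0 j0 d1.
  have := C i1 j2 false true; have := C i1 j2 true true; have := C i2 j2 true false.
  rewrite /Kn1 /Kn2 /K /= /B e1 e2 e3 /=.
  by case: (b11 (sigv v) j2); rewrite /= => ? ? ?; congruence.
apply: cutT vV _ _ _ _ => [i j e|i j e|i e|j e]; rewrite /K /=.
- have -> : b00 B i by rewrite /B sig00E; apply/existsP; exists j; apply/eqP.
  by have -> : b11 B j by rewrite /B sig11E; apply/existsP; exists i; apply/eqP.
- have -> : b01 B i by rewrite /B sig01E; apply/existsP; exists j; apply/eqP.
  have -> : b10 B j by rewrite /B sig10E; apply/existsP; exists i; apply/eqP.
  by rewrite !andbF.
- move: (nI i); rewrite e eqxx andbT.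
  by case: (b00 B i); case: (b01 B i).
- move: (nJ j); rewrite e eqxx andbT.
  by case: (b10 B j); case: (b11 B j).
Qed.

Definition NF v (B : sig_t N) (d : R) := exists s, forall i,
  [/\ X v i = (if b00 B i then s else s + d + al i),
      W v i = (if b01 B i then s + d else s - al i),
      Y v i = (if b11 B i then s else s + d - be i) &
      Z v i = (if b10 B i then s + d else s + be i)].

Lemma NF_of_tight v B d :
  (forall i, b00 B i || b01 B i) -> (forall j, b10 B j || b11 B j) ->
  (forall i j, b00 B i -> b11 B j -> X v i = Y v j) ->
  (forall i j, b01 B i -> b10 B j -> W v i = Z v j) ->
  (forall i, ~~ (b00 B i && b01 B i) -> X v i = W v i + al i) ->
  (forall j, ~~ (b10 B j && b11 B j) -> Z v j = Y v j + be j) ->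
  (exists i, [/\ b00 B i, b01 B i, X v i = W v i + al i & d = - al i]) \/
  (exists j, [/\ b10 B j, b11 B j, Z v j = Y v j + be j & d = be j]) ->
  (exists i, b00 B i) -> (exists j, b11 B j) -> (exists i, b01 B i) ->
  (exists j, b10 B j) -> NF v B d.
Proof.
move=> m0 m1 h1 h2 h3 h4 hc [i0 e0] [j0 e1] [i2 e2] [j2 e3].
exists (X v i0).
have Xs i : b00 B i -> X v i = X v i0 by move=> bi; rewrite (h1 i j0) // (h1 i0 j0).
have Ys j : b11 B j -> Y v j = X v i0 by move=> bj; rewrite (h1 i0 j).
have [Wt Zt] : (forall i, b01 B i -> W v i = X v i0 + d) /\
               (forall j, b10 B j -> Z v j = X v i0 + d).
  case: hc => [[k [k0 k1 k2 ->]]|[k [k0 k1 k2 ->]]].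
  - have Wk : W v k = X v i0 - al k by have := Xs k k0; lra.
    have Zs j : b10 B j -> Z v j = X v i0 - al k by move=> bj; rewrite -(h2 k j) // Wk.
    split => [i bi|j bj]; last by rewrite Zs.
    by rewrite (h2 i j2) // Zs.
  - have Zk : Z v k = X v i0 + be k by rewrite k2 (Ys k k1).
    split => [i bi|j bj]; first by rewrite (h2 i k).
    by rewrite -(h2 i2 j) // (h2 i2 k).
move=> i; split.
- case: ifP => b0; first exact: Xs.
  have b1 : b01 B i by move: (m0 i); rewrite b0.
  by rewrite h3 ?b0 // Wt //; lra.
- case: ifP => b1; first exact: Wt.
  have b0 : b00 B i by move: (m0 i); rewrite b1 orbF.
  by have := h3 i; rewrite b1 andbF => /(_ isT); rewrite Xs //; lra.
- case: ifP => b1; first exact: Ys.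
  have b0 : b10 B i by move: (m1 i); rewrite b1 orbF.
  by have := h4 i; rewrite b1 andbF => /(_ isT); rewrite Zt //; lra.
- case: ifP => b0; first exact: Zt.
  have b1 : b11 B i by move: (m1 i); rewrite b0.
  by rewrite h4 ?b0 // Ys //.
Qed.

Lemma NF_Mequiv v w B d : NF v B d -> NF w B d -> Mequiv v w.
Proof.
move=> [s1 h1] [s2 h2] i j d0 d1.
case: (h1 i) (h1 j) (h2 i) (h2 j) => [x1 w1 _ _] [_ _ y1 z1] [x2 w2 _ _] [_ _ y2 z2].
case: d0; case: d1; rewrite ?Mv00 ?Mv01 ?Mv10 ?Mv11.
- move: y1 z1 y2 z2; case: (b11 B j); case: (b10 B j) => -> -> -> ->; ring.
- move: w1 z1 w2 z2; case: (b01 B i); case: (b10 B j) => -> -> -> ->; ring.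
- move: x1 y1 x2 y2; case: (b00 B i); case: (b11 B j) => -> -> -> ->; ring.
- move: x1 w1 x2 w2; case: (b00 B i); case: (b01 B i) => -> -> -> ->; ring.
Qed.

Definition good (B : sig_t N) (d : R) :=
  [/\ (forall i, b00 B i || b01 B i) /\ (forall j, b10 B j || b11 B j),
      (forall i, ~~ (b00 B i && b01 B i) -> d < - al i) /\
      (forall j, ~~ (b10 B j && b11 B j) -> be j < d),
      (forall i, b00 B i && b01 B i -> - al i <= d) /\
      (forall j, b10 B j && b11 B j -> d <= be j),
      (exists i, [/\ b00 B i, b01 B i & d = - al i]) \/
      (exists j, [/\ b10 B j, b11 B j & d = be j]) &
      [/\ (exists i, b00 B i), (exists j, b11 B j), (exists i, b01 B i) &
          (exists j, b10 B j)]].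

Lemma vertex_good v : is_vertex gamma v -> exists d, good (sigv v) d /\ NF v (sigv v) d.
Proof.
move=> vV; set B := sigv v.
have hne : [/\ (exists i, b00 B i), (exists j, b11 B j), (exists i, b01 B i) &
          (exists j, b10 B j)].
  by split; [exact: vE1 | exact: b00_b11 (vE1 vV) | exact: vE2 | exact: b01_b10 (vE2 vV)].
have m0 i : b00 B i || b01 B i by exact: vBm0.
have m1 j : b10 B j || b11 B j by exact: vBm1.
have [d [hc NFv]] : exists d, ((exists i, [/\ b00 B i, b01 B i & d = - al i]) \/
      (exists j, [/\ b10 B j, b11 B j & d = be j])) /\ NF v B d.
  case: hne => hn0 hn1 hn2 hn3.
  case: (vconn vV) => [[i [h1 h2 h3]]|[j [h1 h2 h3]]].
  - exists (- al i); split; first by left; exists i.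
    apply: NF_of_tight => //.
    + by move=> ? ?; apply: feas1 vV.1.
    + by move=> ? ?; apply: feas2 vV.1.
    + by move=> ? ?; apply: vT3.
    + by move=> ? ?; apply: vT4.
    + by left; exists i.
  - exists (be j); split; first by right; exists j.
    apply: NF_of_tight => //.
    + by move=> ? ?; apply: feas1 vV.1.
    + by move=> ? ?; apply: feas2 vV.1.
    + by move=> ? ?; apply: vT3.
    + by move=> ? ?; apply: vT4.
    + by right; exists j.
exists d; split => //.
have vH := vV.1.
case: (NFv) => s hs.
case: (hne) => [[i0 e0] [j0 e1] [i2 e2] [j2 e3]].
have Xi0 : X v i0 = s by case: (hs i0); rewrite e0.
have Yj0 : Y v j0 = s by case: (hs j0); rewrite e1.
have Wi2 : W v i2 = s + d by case: (hs i2); rewrite e2.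
have Zj2 : Z v j2 = s + d by case: (hs j2); rewrite e3.
split => //; first split.
- move=> i; case/nandP => nb.
  + have b1 : b01 B i by move: (m0 i); rewrite (negbTE nb).
    have Xi : X v i = s + d + al i by case: (hs i); rewrite (negbTE nb).
    have : X v i < Y v j0.
      rewrite lt_neqAle HXY // andbT; apply: contra nb => e.
      by rewrite /B sig00E; apply/existsP; exists j0.
    lra.
  + have Wi : W v i = s - al i by case: (hs i); rewrite (negbTE nb).
    have : Z v j2 < W v i.
      rewrite lt_neqAle HZW // andbT eq_sym; apply: contra nb => e.
      by rewrite /B sig01E; apply/existsP; exists j2.
    lra.
- move=> j; case/nandP => nb.
  + have Zj : Z v j = s + be j by case: (hs j); rewrite (negbTE nb).
    have : Z v j < W v i2.
      rewrite lt_neqAle HZW // andbT eq_sym; apply: contra nb => e.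
      by rewrite /B sig10E; apply/existsP; exists i2.
    lra.
  + have Yj : Y v j = s + d - be j by case: (hs j); rewrite (negbTE nb).
    have : X v i0 < Y v j.
      rewrite lt_neqAle HXY // andbT; apply: contra nb => e.
      by rewrite /B sig11E; apply/existsP; exists i0.
    lra.
- split.
  + move=> i /andP [b0 b1]; have := HXW i vH; case: (hs i); rewrite b0 b1 => -> -> _ _.
    lra.
  + move=> j /andP [b0 b1]; have := HZY j vH; case: (hs j); rewrite b0 b1 => _ _ -> ->.
    lra.
Qed.

Lemma key_ab i j : be j <= - al i.
Proof. rewrite /al /be; have := g0 j; have := gmax i; lra. Qed.

Lemma good_unique B d1 d2 : good B d1 -> good B d2 -> d1 = d2.
Proof.
case=> _ _ [c31 c41] hc1 _ [_ _ [c32 c42] hc2 _].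
case: hc1 => [[i [a b E1]]|[j [a b E1]]]; case: hc2 => [[i' [a' b' E2]]|[j' [a' b' E2]]].
- have := c31 i' (introT andP (conj a' b')); have := c32 i (introT andP (conj a b)); lra.
- have := c32 i (introT andP (conj a b)); have := key_ab i j'; have := c41 j' (introT andP (conj a' b')); lra.
- have := c31 i' (introT andP (conj a' b')); have := key_ab i' j; have := c42 j (introT andP (conj a b)); lra.
- have := c41 j' (introT andP (conj a' b')); have := c42 j (introT andP (conj a b)); lra.
Qed.

Definition vB (B : sig_t N) (d : R) : vec R N := fun y dd z =>
  if dd then
    (if z then gamma y - (if b11 B y then 0 else d - be y)
     else (if b10 B y then d else be y) + gamma y)
  else
    (if z then - (if b01 B y then d else - al y) - gamma y
     else (if b00 B y then 0 else d + al y) - gamma y).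

Lemma XvB B d i : X (vB B d) i = if b00 B i then 0 else d + al i.
Proof. rewrite /X /vB /=; ring. Qed.
Lemma WvB B d i : W (vB B d) i = if b01 B i then d else - al i.
Proof. rewrite /W /vB /=; ring. Qed.
Lemma YvB B d i : Y (vB B d) i = if b11 B i then 0 else d - be i.
Proof. rewrite /Y /vB /=; ring. Qed.
Lemma ZvB B d i : Z (vB B d) i = if b10 B i then d else be i.
Proof. rewrite /Z /vB /=; ring. Qed.

Section GoodProps.
Variables (B : sig_t N) (d : R).
Hypothesis g : good B d.

Lemma gX i : X (vB B d) i <= 0.
Proof.
case: g => _ [c1 _] _ _ _; rewrite XvB; case: ifP => b; first by [].
have := c1 i; rewrite b /= => /(_ isT); lra.
Qed.
Lemma gX' i : ~~ b00 B i -> X (vB B d) i < 0.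
Proof.
case: g => _ [c1 _] _ _ _; rewrite XvB => /negbTE b; rewrite b.
have := c1 i; rewrite b /= => /(_ isT); lra.
Qed.
Lemma gY j : 0 <= Y (vB B d) j.
Proof.
case: g => _ [_ c2] _ _ _; rewrite YvB; case: ifP => b; first by [].
have := c2 j; rewrite b andbF /= => /(_ isT); lra.
Qed.
Lemma gY' j : ~~ b11 B j -> 0 < Y (vB B d) j.
Proof.
case: g => _ [_ c2] _ _ _; rewrite YvB => /negbTE b; rewrite b.
have := c2 j; rewrite b andbF /= => /(_ isT); lra.
Qed.
Lemma gW i : d <= W (vB B d) i.
Proof.
case: g => _ [c1 _] _ _ _; rewrite WvB; case: ifP => b; first by [].
have := c1 i; rewrite b andbF /= => /(_ isT); lra.
Qed.
Lemma gW' i : ~~ b01 B i -> d < W (vB B d) i.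
Proof.
case: g => _ [c1 _] _ _ _; rewrite WvB => /negbTE b; rewrite b.
have := c1 i; rewrite b andbF /= => /(_ isT); lra.
Qed.
Lemma gZ j : Z (vB B d) j <= d.
Proof.
case: g => _ [_ c2] _ _ _; rewrite ZvB; case: ifP => b; first by [].
have := c2 j; rewrite b /= => /(_ isT); lra.
Qed.
Lemma gZ' j : ~~ b10 B j -> Z (vB B d) j < d.
Proof.
case: g => _ [_ c2] _ _ _; rewrite ZvB => /negbTE b; rewrite b.
have := c2 j; rewrite b /= => /(_ isT); lra.
Qed.

Lemma good_inH : inH gamma (vB B d).
Proof.
apply: inH_of.
- move=> i j; have := gX i; have := gY j; lra.
- move=> i j; have := gZ j; have := gW i; lra.
- case: g => [[m0 _] _ [c3 _] _ _] i; rewrite XvB WvB.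
  move: (m0 i) (c3 i); case: (b00 B i); case: (b01 B i) => //= _ h; [have := h isT; lra | lra ..].
- case: g => [[_ m1] _ [_ c4] _ _] j; rewrite ZvB YvB.
  move: (m1 j) (c4 j); case: (b10 B j); case: (b11 B j) => //= _ h; [have := h isT; lra | lra ..].
Qed.

Lemma good_sig : sigv (vB B d) = B.
Proof.
case: g => _ _ _ _ [[i0 e0] [j0 e1] [i2 e2] [j2 e3]].
apply/ffunP => [[[y dd] z]]; case: dd; case: z.
- change (b11 (sigv (vB B d)) y = b11 B y); rewrite sig11E.
  case: (boolP (b11 B y)) => b.
  + apply/existsP; exists i0; rewrite XvB YvB e0 b //.
  + apply/existsPn => i; rewrite lt_eqF //; have := gX i; have := gY' b; lra.
- change (b10 (sigv (vB B d)) y = b10 B y); rewrite sig10E.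
  case: (boolP (b10 B y)) => b.
  + apply/existsP; exists i2; rewrite WvB ZvB e2 b //.
  + apply/existsPn => i; rewrite eq_sym lt_eqF //; have := gW i; have := gZ' b; lra.
- change (b01 (sigv (vB B d)) y = b01 B y); rewrite sig01E.
  case: (boolP (b01 B y)) => b.
  + apply/existsP; exists j2; rewrite WvB ZvB e3 b //.
  + apply/existsPn => j; rewrite eq_sym lt_eqF //; have := gW' b; have := gZ j; lra.
- change (b00 (sigv (vB B d)) y = b00 B y); rewrite sig00E.
  case: (boolP (b00 B y)) => b.
  + apply/existsP; exists j0; rewrite XvB YvB e1 b //.
  + apply/existsPn => j; rewrite lt_eqF //; have := gX' b; have := gY j; lra.
Qed.

Lemma NF_vB : NF (vB B d) B d.
Proof.
exists 0 => i; rewrite XvB WvB YvB ZvB !add0r; split => //.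
Qed.

End GoodProps.

Lemma transfer v v1 v2 lam i j d0 d1 : inH gamma v1 -> inH gamma v2 ->
  0 < lam -> lam < 1 ->
  (forall y dd z, v y dd z = lam * v1 y dd z + (1 - lam) * v2 y dd z) ->
  Mv v i j d0 d1 = gamma j - gamma i ->
  Mv v1 i j d0 d1 = gamma j - gamma i /\ Mv v2 i j d0 d1 = gamma j - gamma i.
Proof.
move=> H1 H2 l0 l1 E.
have L : Mv v i j d0 d1 = lam * Mv v1 i j d0 d1 + (1 - lam) * Mv v2 i j d0 d1.
  by rewrite /Mv !E; case: d0; case: d1; ring.
move=> t.
have := H1 i j d0 d1; have := H2 i j d0 d1.
move: L t; set a := Mv v i j d0 d1; set x := Mv v1 i j d0 d1; set y := Mv v2 i j d0 d1.
set c := gamma j - gamma i => L t hy hx.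
have ex : lam * (c - x) = 0 /\ (1 - lam) * (c - y) = 0.
  have p1 : 0 <= lam * (c - x) by apply: mulr_ge0; lra.
  have p2 : 0 <= (1 - lam) * (c - y) by apply: mulr_ge0; lra.
  have : lam * (c - x) + (1 - lam) * (c - y) = 0.
    rewrite -t L; ring.
  lra.
case: ex => /eqP; rewrite mulf_eq0 => /orP [/eqP|/eqP]; try lra.
move=> e1 /eqP; rewrite mulf_eq0 => /orP [/eqP|/eqP]; lra.
Qed.

Lemma good_vertex B d : good B d -> is_vertex gamma (vB B d).
Proof.
move=> g; split; first exact: good_inH.
move=> lam v1 v2 l0 l1 H1 H2 E.
have key (v' : vec R N) : inH gamma v' ->
   (forall i j d0 d1, Mv (vB B d) i j d0 d1 = gamma j - gamma i ->
                      Mv v' i j d0 d1 = gamma j - gamma i) -> Mequiv v' (vB B d).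
  move=> H' tr; apply: (NF_Mequiv (B := B) (d := d)); last exact: NF_vB.
  case: (g) => [[m0 m1] _ _ hc [e0 e1 e2 e3]].
  apply: NF_of_tight => //.
  - move=> i j b0 b1.
    have t : Mv (vB B d) i j false true = gamma j - gamma i.
      by rewrite Mv01 XvB YvB b0 b1; ring.
    by move: (tr _ _ _ _ t); rewrite Mv01; lra.
  - move=> i j b0 b1.
    have t : Mv (vB B d) i j true false = gamma j - gamma i.
      by rewrite Mv10 WvB ZvB b0 b1; ring.
    by move: (tr _ _ _ _ t); rewrite Mv10; lra.
  - move=> i nb.
    have t : Mv (vB B d) i ord0 false false = gamma ord0 - gamma i.
      rewrite Mv00 XvB WvB /al; move: (m0 i) nb.
      by case: (b00 B i); case: (b01 B i) => //= _ _; ring.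
    exact: T00 H' (tr _ _ _ _ t).
  - move=> j nb.
    have t : Mv (vB B d) ord_max j true true = gamma j - gamma ord_max.
      rewrite Mv11 ZvB YvB /be; move: (m1 j) nb.
      by case: (b10 B j); case: (b11 B j) => //= _ _; ring.
    exact: T11 H' (tr _ _ _ _ t).
  - case: hc => [[i [b0 b1 ed]]|[j [b0 b1 ed]]].
    + left; exists i; split => //.
      have t : Mv (vB B d) i ord0 false false = gamma ord0 - gamma i.
        by rewrite Mv00 XvB WvB b0 b1 ed /al; ring.
      exact: T00 H' (tr _ _ _ _ t).
    + right; exists j; split => //.
      have t : Mv (vB B d) ord_max j true true = gamma j - gamma ord_max.
        by rewrite Mv11 ZvB YvB b0 b1 ed /be; ring.
      exact: T11 H' (tr _ _ _ _ t).
split; apply: key => // i j d0 d1 t.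
- by case: (transfer H1 H2 l0 l1 E t).
- by case: (transfer H1 H2 l0 l1 E t).
Qed.

Lemma neq_or (a b : bool) : a != b -> a || b. Proof. by case: a; case: b. Qed.
Lemma nand_neq (a b : bool) : a || b -> ~~ (a && b) -> a != b.
Proof. by case: a; case: b. Qed.
Lemma ord_maxE (i : 'I_N) : (m <= i)%N -> i = ord_max.
Proof. move=> h; apply: val_inj => /=; apply/eqP; rewrite eqn_leq h andbT; by have := ltn_ord i; rewrite ltnS. Qed.
Lemma ord0E (i : 'I_N) : (i <= 0)%N -> i = ord0.
Proof. by move=> h; apply: val_inj => /=; apply/eqP; rewrite -leqn0. Qed.

Lemma S_good B : B \in S N -> exists d, good B d.
Proof.
rewrite inE => /or3P [h|h|h].
- case/existsP: h => t /and4P [tn /forallP h0 /forallP h1 /existsP [i1 /existsP [j1 /andP [ei ej]]]].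
  have both i : (t <= i)%N -> b00 B i && b01 B i.
    by move=> ti; case/andP: (h0 i) => /implyP /(_ ti).
  have dif i : (i < t)%N -> b00 B i != b01 B i.
    by move=> ti; case/andP: (h0 i) => _ /implyP /(_ ti).
  have dif1 j : b10 B j != b11 B j := h1 j.
  have tm : (t < (ord_max : 'I_N))%N by move: tn; rewrite /= ltnS.
  exists (- al t); split.
  + split => i; last exact: neq_or.
    case: (leqP t i) => ti; last exact: neq_or (dif i ti).
    by case/andP: (both i ti) => ->.
  + split.
    * move=> i nb; have ti : (i < t)%N by rewrite ltnNge; apply: contra nb => /both.
      have := gmono ti; rewrite /al; lra.
    * move=> j _; have := gmono tm; have := g0 j; rewrite /al /be; lra.
  + split.
    * move=> i bb; have ti : (t <= i)%N.
        by rewrite leqNgt; apply: contraL bb => /dif; case: (b00 B i); case: (b01 B i).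
      have := le_g ti; rewrite /al; lra.
    * move=> j bb; exfalso; move: (dif1 j) bb; by case: (b10 B j); case: (b11 B j).
  + left; exists t; case/andP: (both t (leqnn t)) => -> ->; split => //.
  + split; [exists t | exists j1 | exists t | exists i1] => //.
    * by case/andP: (both t (leqnn t)).
    * by case/andP: (both t (leqnn t)).
- have h' i := and4P (forallP h i).
  have bmax : b00 B ord_max && b01 B ord_max.
    by case: (h' ord_max) => /implyP /(_ (eqxx _)) H _ _ _.
  have dI i : (i < m)%N -> b00 B i != b01 B i.
    by move=> im; case: (h' i) => _ /implyP H _ _; apply: H; rewrite ltnS.
  have b0 : b10 B ord0 && b11 B ord0.
    by case: (h' ord0) => _ _ /implyP /(_ (eqxx _)) H _.
  have dJ j : (0 < j)%N -> b10 B j != b11 B j.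
    by move=> j0; case: (h' j) => _ _ _ /implyP H; apply: H.
  have iM i : ~~ (b00 B i && b01 B i) -> (i < m)%N.
    move=> nb; rewrite ltnNge; apply: contra nb => /ord_maxE ->; exact: bmax.
  have j0 j : b10 B j && b11 B j -> j = ord0.
    move=> bb; apply: ord0E; rewrite leqNgt; apply: contraL bb => /dJ.
    by case: (b10 B j); case: (b11 B j).
  exists (- al ord_max); split.
  + split => i.
    * case: (ltnP i m) => im; first exact: neq_or (dI i im).
      by rewrite (ord_maxE im); case/andP: bmax => ->.
    * case: (posnP i) => i0; last exact: neq_or (dJ i i0).
      by rewrite (ord0E (eq_leq i0)); case/andP: b0 => ->.
  + split.
    * move=> i /iM im; have := gmono (im : (i < (ord_max : 'I_N))%N); rewrite /al; lra.
    * move=> j nb; have jp : (0 < j)%N.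
        by rewrite lt0n; apply: contra nb => /eqP e; rewrite (ord0E (eq_leq e)).
      have := gmono (jp : ((ord0 : 'I_N) < j)%N); rewrite /al /be; lra.
  + split.
    * move=> i bb; have -> : i = ord_max.
        apply: ord_maxE; rewrite leqNgt; apply: contraL bb => /dI.
        by case: (b00 B i); case: (b01 B i).
      lra.
    * move=> j /j0 ->; rewrite /al /be; lra.
  + by left; exists ord_max; case/andP: bmax => -> ->.
  + by case/andP: bmax => b1 b2; case/andP: b0 => b3 b4; split;
      [exists ord_max | exists ord0 | exists ord_max | exists ord0].
- case/existsP: h => t /and4P [tp /forallP h0 /forallP h1 /existsP [i1 /existsP [j1 /andP [ei ej]]]].
  have both j : (j <= t)%N -> b10 B j && b11 B j.
    by move=> ti; case/andP: (h0 j) => /implyP /(_ ti).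
  have dif j : (t < j)%N -> b10 B j != b11 B j.
    by move=> ti; case/andP: (h0 j) => _ /implyP /(_ ti).
  have dif0 i : b00 B i != b01 B i := h1 i.
  exists (be t); split.
  + split => i; first exact: neq_or.
    case: (leqP i t) => ti; last exact: neq_or (dif i ti).
    by case/andP: (both i ti) => ->.
  + split.
    * move=> i _; have := gmono (tp : ((ord0 : 'I_N) < t)%N); have := gmax i.
      rewrite /al /be; lra.
    * move=> j nb; have ti : (t < j)%N by rewrite ltnNge; apply: contra nb => /both.
      have := gmono ti; rewrite /be; lra.
  + split.
    * move=> i bb; exfalso; move: (dif0 i) bb; by case: (b00 B i); case: (b01 B i).
    * move=> j bb; have ti : (j <= t)%N.
        by rewrite leqNgt; apply: contraL bb => /dif; case: (b10 B j); case: (b11 B j).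
      have := le_g ti; rewrite /be; lra.
  + right; exists t; case/andP: (both t (leqnn t)) => -> ->; split => //.
  + split; [exists i1 | exists t | exists j1 | exists t] => //.
    * by case/andP: (both t (leqnn t)).
    * by case/andP: (both t (leqnn t)).
Qed.

Lemma good_S B d : good B d -> B \in S N.
Proof.
case=> [[m0 m1] [c1 c2] [c3 c4] hc [[i0 e0] [j0 e1] [i2 e2] [j2 e3]]].
have dif0 i : ~~ (b00 B i && b01 B i) -> b00 B i != b01 B i := nand_neq (m0 i).
have dif1 j : ~~ (b10 B j && b11 B j) -> b10 B j != b11 B j := nand_neq (m1 j).
rewrite inE; case: hc => [[k [k0 k1 ed]]|[k [k0 k1 ed]]].
- have bI i : (k <= i)%N -> b00 B i && b01 B i.
    move=> ki; apply: contraT => nb; have := c1 i nb; rewrite ed /al => lt.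
    have : gamma i < gamma k by lra.
    by move/g_lt; rewrite ltnNge ki.
  have nbI i : (i < k)%N -> ~~ (b00 B i && b01 B i).
    move=> ik; apply/negP => bb; have := c3 i bb; rewrite ed /al => le.
    have : gamma k <= gamma i by lra.
    by move/g_le; rewrite leqNgt ik.
  have nbJ j : (k < m)%N -> ~~ (b10 B j && b11 B j).
    move=> km; apply/negP => bb; have := c4 j bb; rewrite ed /al /be => le.
    have := g0 j; have := gmono (km : (k < (ord_max : 'I_N))%N); lra.
  case: (ltnP k m) => km.
  + apply/or3P; apply: Or31; apply/existsP; exists k; apply/and4P; split.
    * by rewrite /= ltnS.
    * apply/forallP => i; apply/andP; split; apply/implyP => h; first exact: bI.
      exact: dif0 (nbI _ h).
    * apply/forallP => j; exact: dif1 (nbJ _ km).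
    * by apply/existsP; exists j2; apply/existsP; exists j0; apply/andP; split.
  + have kE : k = ord_max := ord_maxE km.
    apply/or3P; apply: Or32; apply/forallP => i; apply/and4P; split; apply/implyP => h.
    * apply: bI; rewrite kE /=; move: h; rewrite eqSS => /eqP ->; exact: leqnn.
    * apply: dif0; apply: nbI; rewrite kE /=; by rewrite -ltnS.
    * have i0' : i = ord0 by apply: val_inj; apply/eqP.
      apply: contraT => nb; have := c2 i nb; rewrite ed kE i0' /al /be; lra.
    * apply: dif1; apply/negP => bb; have := c4 i bb; rewrite ed kE /al /be.
      have := gmono (h : ((ord0 : 'I_N) < i)%N); lra.
- have bJ j : (j <= k)%N -> b10 B j && b11 B j.
    move=> jk; apply: contraT => nb; have := c2 j nb; rewrite ed /be => lt.
    have : gamma k < gamma j by lra.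
    by move/g_lt; rewrite ltnNge jk.
  have nbJ j : (k < j)%N -> ~~ (b10 B j && b11 B j).
    move=> kj; apply/negP => bb; have := c4 j bb; rewrite ed /be => le.
    have : gamma j <= gamma k by lra.
    by move/g_le; rewrite leqNgt kj.
  have nbI i : (0 < k)%N -> ~~ (b00 B i && b01 B i).
    move=> kp; apply/negP => bb; have := c3 i bb; rewrite ed /al /be => le.
    have := gmax i; have := gmono (kp : ((ord0 : 'I_N) < k)%N); lra.
  case: (posnP k) => kp.
  + have kE : k = ord0 by apply: val_inj.
    apply/or3P; apply: Or32; apply/forallP => i; apply/and4P; split; apply/implyP => h.
    * have iE : i = ord_max by apply: ord_maxE; move: h; rewrite eqSS => /eqP ->.
      apply: contraT => nb; have := c1 i nb; rewrite ed kE iE /al /be; lra.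
    * apply: dif0; apply/negP => bb; have := c3 i bb; rewrite ed kE /al /be => le.
      have : gamma ord_max <= gamma i by lra.
      by move/g_le; rewrite /= leqNgt -ltnS h.
    * by apply: bJ; rewrite kp; move: h => /eqP ->.
    * by apply: dif1; apply: nbJ; rewrite kp.
  + apply/or3P; apply: Or33; apply/existsP; exists k; apply/and4P; split => //.
    * apply/forallP => j; apply/andP; split; apply/implyP => h; first exact: bJ.
      exact: dif1 (nbJ _ h).
    * apply/forallP => i; exact: dif0 (nbI _ kp).
    * by apply/existsP; exists i0; apply/existsP; exists i2; apply/andP; split.
Qed.

Lemma fin_choice (T : finType) (A : Type) (a0 : A) (P : T -> A -> Prop) :
  (forall x, exists y, P x y) -> exists f : T -> A, forall x, P x (f x).
Proof.
move=> H.
suff: forall s : seq T, exists f : T -> A, forall x, x \in s -> P x (f x).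
  by case/(_ (enum T)) => f hf; exists f => x; apply: hf; rewrite mem_enum.
elim=> [|a s [f hf]]; first by exists (fun _ => a0).
case: (H a) => y hy; exists (fun x => if x == a then y else f x) => x.
rewrite inE; case: eqP => [-> //|_ /= xs]; exact: hf.
Qed.

Theorem vertex_count : num_vertex_classes_is gamma #|S N|.
Proof.
split.
- have [f fP] : exists f : sig_t N -> R, forall B, B \in S N -> good B (f B).
    apply: (@fin_choice _ _ 0 (fun B d => B \in S N -> good B d)) => B; case: (boolP (B \in S N)) => h.
    + by case: (S_good h) => d g; exists d.
    + by exists 0.
  exists (fun k => vB (enum_val k) (f (enum_val k))); split.
  + by move=> k; apply: good_vertex; apply: fP; apply: enum_valP.
  + move=> k l kl E; apply: kl; apply: enum_val_inj.
    have := sigv_equiv E.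
    by rewrite !good_sig //; apply: fP; apply: enum_valP.
- move=> m' ws wV wD.
  pose F k := sigv (ws k).
  have Finj : injective F.
    move=> k l e; case: (eqVneq k l) => // kl; exfalso; apply: (wD k l); first by apply/eqP.
    have [d1 [g1 n1]] := vertex_good (wV k).
    have [d2 [g2 n2]] := vertex_good (wV l).
    rewrite -/(F k) e in g1 n1; rewrite -/(F l) in g2 n2.
    rewrite (good_unique g1 g2) in n1.
    exact: NF_Mequiv n1 n2.
  rewrite -[m']card_ord -(card_imset _ Finj).
  apply: subset_leq_card; apply/subsetP => B /imsetP [k _ ->].
  by have [d [g _]] := vertex_good (wV k); exact: good_S g.
Qed.

End Vert.

Local Close Scope ring_scope.
Local Open Scope nat_scope.

Lemma card_dif : #|[pred x : bool * bool | x.1 != x.2]| = 2.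
Proof.
rewrite (eq_card (B := mem [:: (true,false); (false,true)])); first by apply/card_uniqP.
by case=> [[] []].
Qed.
Lemma card_both : #|[pred x : bool * bool | x.1 && x.2]| = 1.
Proof.
rewrite (eq_card (B := pred1 (true,true))); first by rewrite card1.
by case=> [[] []].
Qed.

Lemma prod_lt (n t : nat) : \prod_(i < n) (if (i < t)%N then 2 else 1) = 2 ^ (minn t n).
Proof.
elim: n => [|n IH]; first by rewrite big_ord0 minn0.
rewrite big_ord_recr /= IH; case: (ltnP n t) => h.
- have e : minn t n.+1 = n.+1 by lia.
  by rewrite e expnS mulnC.
- have e : minn t n.+1 = t by lia.
  by rewrite e muln1.
Qed.

Lemma prod_gt (n t : nat) : \prod_(i < n) (if (t < i)%N then 2 else 1) = 2 ^ (n - t.+1).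
Proof.
elim: n => [|n IH]; first by rewrite big_ord0.
rewrite big_ord_recr /= IH; case: (ltnP t n) => h.
- have e : n.+1 - t.+1 = (n - t.+1).+1 by lia.
  by rewrite e expnS mulnC.
- have e : n.+1 - t.+1 = n - t.+1 by lia.
  by rewrite e muln1.
Qed.

Lemma sum_pow1 (m : nat) : \sum_(t < m) 2 ^ t = 2 ^ m - 1.
Proof.
elim: m => [|m IH]; first by rewrite big_ord0.
rewrite big_ord_recr /= IH expnS; have := expn_gt0 2 m; lia.
Qed.

Lemma sum_pow2 (m : nat) : \sum_(t < m) 2 ^ (m - t.+1) = 2 ^ m - 1.
Proof.
elim: m => [|m IH]; first by rewrite big_ord0.
rewrite big_ord_recl /= subn1 /=.
rewrite (eq_bigr (fun t : 'I_m => 2 ^ (m - t.+1))); last first.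
  by move=> t _; rewrite /bump /= add1n subSS.
rewrite IH expnS; have := expn_gt0 2 m; lia.
Qed.

Lemma card_uniq_ex (T I : finType) (P : pred I) (E : I -> pred T) :
  (forall t t' x, P t -> P t' -> E t x -> E t' x -> t = t') ->
  #|[set x | [exists t, P t && E t x]]| = \sum_(t | P t) #|[set x | E t x]|.
Proof.
move=> U.
rewrite -sum1_card big_mkcond /=.
rewrite (eq_bigr (fun t => \sum_(x : T) (E t x : nat))); last first.
  by move=> t _; rewrite -sum1_card big_mkcond /=; apply: eq_bigr => x _; rewrite inE; case: (E t x).
rewrite exchange_big /=.
apply: eq_bigr => x _; rewrite inE.
case: (boolP [exists t, P t && E t x]) => [/existsP [t0 /andP [p0 e0]]|/existsPn ne].
- rewrite (bigD1 t0) //= e0 big1 // => t /andP [pt nt].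
  case: (boolP (E t x)) => // et; by rewrite (U _ _ _ pt p0 et e0) eqxx in nt.
- rewrite big1 // => t pt; have := ne t; rewrite pt /=; by case: (E t x).
Qed.

Lemma card_ab (b : bool) :
  #|[pred x : bool * bool | (~~ b ==> x.1 && x.2) && (b ==> (x.1 != x.2))]| = if b then 2 else 1.
Proof.
case: b; [rewrite -card_dif | rewrite -card_both]; apply: eq_card => x; rewrite !inE //=.
by rewrite andbT.
Qed.

Lemma both_dif (x : bool * bool) : x.1 && x.2 -> x.1 != x.2 -> False.
Proof. by case: x => [[] []]. Qed.

Section Cnt.
Variable m : nat.
Local Notation N := m.+1.
Local Notation G := {ffun 'I_N -> bool * bool}.

Lemma cnt_prod (A : 'I_N -> pred (bool * bool)) :
  #|[set g : G | [forall i, A i (g i)]]| = \prod_(i < N) #|A i|.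
Proof.
have := card_family (fun i : 'I_N => A i).
rewrite foldrE big_map big_enum /= => <-.
apply: eq_card => g; rewrite inE; apply/forallP/familyP => h i; exact: h.
Qed.

Definition dif (x : bool * bool) := x.1 != x.2.
Definition both (x : bool * bool) := x.1 && x.2.
Definition Qp (g : G) := [forall i, dif (g i)] && [exists i, exists j, (g i).1 && (g j).2].
Definition E1 (t : 'I_N) (g : G) :=
  [forall i : 'I_N, ((t <= i)%N ==> both (g i)) && ((i < t)%N ==> dif (g i))].
Definition P1p (g : G) := [exists t : 'I_N, (t.+1 < N)%N && E1 t g].
Definition R0p (g : G) :=
  [forall i : 'I_N, ((i.+1 == N) ==> both (g i)) && ((i.+1 < N)%N ==> dif (g i))].
Definition R1p (g : G) :=
  [forall i : 'I_N, ((val i == 0)%N ==> both (g i)) && ((0 < i)%N ==> dif (g i))].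
Definition E3 (t : 'I_N) (g : G) :=
  [forall i : 'I_N, ((i <= t)%N ==> both (g i)) && ((t < i)%N ==> dif (g i))].
Definition P3p (g : G) := [exists t : 'I_N, (0 < t)%N && E3 t g].

Lemma cnt_gen (a b : 'I_N -> bool) : (forall i, a i = ~~ b i) ->
  #|[set g : G | [forall i, (a i ==> both (g i)) && (b i ==> dif (g i))]]| =
  \prod_(i < N) (if b i then 2 else 1).
Proof.
move=> ab.
transitivity (\prod_(i < N) #|[pred x : bool * bool | (~~ b i ==> x.1 && x.2) && (b i ==> (x.1 != x.2))]|); last first.
  by apply: eq_bigr => i _; rewrite card_ab.
rewrite -(cnt_prod (fun i => [pred x : bool * bool | (~~ b i ==> x.1 && x.2) && (b i ==> (x.1 != x.2))])).
by apply: eq_card => g; rewrite !inE; apply: eq_forallb => i; rewrite ab.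
Qed.

Lemma cardE1 (t : 'I_N) : #|[set g | E1 t g]| = 2 ^ t.
Proof.
rewrite /E1 (cnt_gen (b := fun i : 'I_N => (i < t)%N)); last by move=> i; rewrite leqNgt.
rewrite prod_lt; have := ltn_ord t; by move=> h; congr (_ ^ _); lia.
Qed.

Lemma cardE3 (t : 'I_N) : #|[set g | E3 t g]| = 2 ^ (N - t.+1).
Proof.
rewrite /E3 (cnt_gen (b := fun i : 'I_N => (t < i)%N)); last by move=> i; rewrite leqNgt.
by rewrite prod_gt.
Qed.

Lemma cardR0 : #|[set g | R0p g]| = 2 ^ m.
Proof.
rewrite /R0p (cnt_gen (b := fun i : 'I_N => (i.+1 < N)%N)).
  rewrite (eq_bigr (fun i : 'I_N => if (i < m)%N then 2 else 1)) ?prod_lt.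
    by congr (_ ^ _); lia.
  by move=> i _; rewrite ltnS.
move=> i; rewrite eqSS ltnS; have := ltn_ord i; rewrite ltnS.
by case: ltngtP.
Qed.

Lemma cardR1 : #|[set g | R1p g]| = 2 ^ m.
Proof.
rewrite /R1p (cnt_gen (b := fun i : 'I_N => (0 < i)%N)); last by move=> i; rewrite lt0n negbK.
by rewrite prod_gt subn1.
Qed.

Lemma E1_uniq t t' g : E1 t g -> E1 t' g -> t = t'.
Proof.
move=> /forallP h /forallP h'; apply: val_inj; apply/eqP.
case: (ltngtP t t') => // lt; exfalso.
- case/andP: (h t) => /implyP /(_ (leqnn _)) b _.
  case/andP: (h' t) => _ /implyP /(_ lt) d; exact: both_dif b d.
- case/andP: (h' t') => /implyP /(_ (leqnn _)) b _.
  case/andP: (h t') => _ /implyP /(_ lt) d; exact: both_dif b d.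
Qed.

Lemma E3_uniq t t' g : E3 t g -> E3 t' g -> t = t'.
Proof.
move=> /forallP h /forallP h'; apply: val_inj; apply/eqP.
case: (ltngtP t t') => // lt; exfalso.
- case/andP: (h' t') => /implyP /(_ (leqnn _)) b _.
  case/andP: (h t') => _ /implyP /(_ lt) d; exact: both_dif b d.
- case/andP: (h t) => /implyP /(_ (leqnn _)) b _.
  case/andP: (h' t) => _ /implyP /(_ lt) d; exact: both_dif b d.
Qed.

Lemma cardP1 : #|[set g | P1p g]| = 2 ^ m - 1.
Proof.
rewrite /P1p (card_uniq_ex (P := fun t : 'I_N => (t.+1 < N)%N) (E := E1)); last first.
  by move=> t t' g _ _; apply: E1_uniq.
rewrite (eq_bigr (fun t : 'I_N => 2 ^ t)); last by move=> t _; rewrite cardE1.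
rewrite big_mkcond big_ord_recr /= ltnn addn0 -sum_pow1.
by apply: eq_bigr => t _; rewrite /= ltnS ltn_ord.
Qed.

Lemma cardP3 : #|[set g | P3p g]| = 2 ^ m - 1.
Proof.
rewrite /P3p (card_uniq_ex (P := fun t : 'I_N => (0 < t)%N) (E := E3)); last first.
  by move=> t t' g _ _; apply: E3_uniq.
rewrite (eq_bigr (fun t : 'I_N => 2 ^ (N - t.+1))); last by move=> t _; rewrite cardE3.
rewrite big_mkcond big_ord_recl /= add0n -sum_pow2.
by apply: eq_bigr => t _; rewrite /bump /= add1n subSS.
Qed.

Definition c10 : G := [ffun _ => (true, false)].
Definition c01 : G := [ffun _ => (false, true)].

Lemma cardQ : #|[set g | Qp g]| = 2 ^ N - 2.
Proof.
pose D := [set g : G | [forall i, dif (g i)]].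
pose Es := [set g : G | [exists i, exists j, (g i).1 && (g j).2]].
have cD : #|D| = 2 ^ N.
  rewrite /D (eq_card (B := [set g : G | [forall i, (false ==> both (g i)) && (true ==> dif (g i))]])).
    by rewrite (cnt_gen (b := fun _ => true)) // prod_nat_const card_ord.
  by move=> g; rewrite !inE; apply: eq_forallb => i.
have e1 : D :&: Es = [set g | Qp g] by apply/setP => g; rewrite !inE.
have e2 : D :\: Es = [set c10; c01].
  apply/setP => g; rewrite !inE; apply/idP/idP.
  - case/andP => nE /forallP dg.
    case: (boolP [exists i, (g i).1]) => [/existsP [i0 gi0]|/existsPn n1].
    + apply/orP; left; apply/eqP/ffunP => j; rewrite ffunE.
      have : ~~ (g j).2.
        apply: contra nE => gj; apply/existsP; exists i0; apply/existsP; exists j.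
        by rewrite gi0.
      by move: (dg j); rewrite /dif; case: (g j) => [[] []].
    + apply/orP; right; apply/eqP/ffunP => j; rewrite ffunE.
      by move: (dg j) (n1 j); rewrite /dif; case: (g j) => [[] []].
  - case/orP => /eqP ->; apply/andP; split.
    + by apply/existsPn => i; apply/existsPn => j; rewrite !ffunE.
    + by apply/forallP => i; rewrite ffunE.
    + by apply/existsPn => i; apply/existsPn => j; rewrite !ffunE.
    + by apply/forallP => i; rewrite ffunE.
have := cardsID Es D; rewrite e1 e2 cards2 cD.
have -> : (c10 != c01) = true.
  by apply/negP => /eqP /ffunP /(_ ord0); rewrite !ffunE.
move=> <-; by rewrite addnK.
Qed.

Definition h0 (B : sig_t N) : G := [ffun i => (B (i, false, false), B (i, false, true))].
Definition h1 (B : sig_t N) : G := [ffun i => (B (i, true, false), B (i, true, true))].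
Definition sp (B : sig_t N) : G * G := (h0 B, h1 B).
Definition unsp (p : G * G) : sig_t N := [ffun x : 'I_N * bool * bool =>
  let: (i, d, z) := x in
  if d then (if z then (p.2 i).2 else (p.2 i).1) else (if z then (p.1 i).2 else (p.1 i).1)].

Lemma sp_unsp p : sp (unsp p) = p.
Proof.
case: p => g0 g1; rewrite /sp; congr pair; apply/ffunP => i; rewrite !ffunE /=.
- by case: (g0 i).
- by case: (g1 i).
Qed.

Lemma sp_inj : injective sp.
Proof.
move=> B B' [e0 e1]; apply/ffunP => [[[i d] z]].
have f0 := congr1 (fun g : G => g i) e0; have f1 := congr1 (fun g : G => g i) e1.
move: f0 f1; rewrite /= !ffunE => [[a b] [c d']].
by case: d; case: z.
Qed.

Lemma inS1E B : inS1 B = P1p (h0 B) && Qp (h1 B).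
Proof.
rewrite /inS1 /P1p /Qp /E1.
have eF t : [forall i : 'I_N, ((t <= i)%N ==> both (h0 B i)) && ((i < t)%N ==> dif (h0 B i))] =
   [forall i : 'I_N, ((t <= i)%N ==> (B (i, false, false) && B (i, false, true))) &&
                     ((i < t)%N ==> (B (i, false, false) != B (i, false, true)))].
  by apply: eq_forallb => i; rewrite /both /dif ffunE.
have eG : [forall i, dif (h1 B i)] = [forall i : 'I_N, B (i, true, false) != B (i, true, true)].
  by apply: eq_forallb => i; rewrite /dif ffunE.
have eH : [exists i, exists j, (h1 B i).1 && (h1 B j).2] =
   [exists i : 'I_N, exists j : 'I_N, B (i, true, false) && B (j, true, true)].
  by apply: eq_existsb => i; apply: eq_existsb => j; rewrite !ffunE.
rewrite eG eH.
apply/existsP/andP => [[t /and4P [a b c d]]|[/existsP [t /andP [a b]] /andP [c d]]].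
- by split; [apply/existsP; exists t; rewrite a eF | rewrite c d].
- by exists t; rewrite a -eF b c d.
Qed.

Lemma inS2E B : inS2 B = R0p (h0 B) && R1p (h1 B).
Proof.
rewrite /inS2 /R0p /R1p.
apply/forallP/andP => [h|[/forallP h /forallP h'] i].
- split; apply/forallP => i; case/and4P: (h i) => a b c d; rewrite /both /dif ffunE /=.
  + by rewrite a b.
  + by rewrite c d.
- move: (h i) (h' i); rewrite /both /dif !ffunE /= => /andP [a b] /andP [c d].
  by rewrite a b c d.
Qed.

Lemma inS3E B : inS3 B = Qp (h0 B) && P3p (h1 B).
Proof.
rewrite /inS3 /P3p /Qp /E3.
have eF t : [forall i : 'I_N, ((i <= t)%N ==> both (h1 B i)) && ((t < i)%N ==> dif (h1 B i))] =
   [forall i : 'I_N, ((i <= t)%N ==> (B (i, true, false) && B (i, true, true))) &&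
                     ((t < i)%N ==> (B (i, true, false) != B (i, true, true)))].
  by apply: eq_forallb => i; rewrite /both /dif ffunE.
have eG : [forall i, dif (h0 B i)] = [forall i : 'I_N, B (i, false, false) != B (i, false, true)].
  by apply: eq_forallb => i; rewrite /dif ffunE.
have eH : [exists i, exists j, (h0 B i).1 && (h0 B j).2] =
   [exists i : 'I_N, exists j : 'I_N, B (i, false, false) && B (j, false, true)].
  by apply: eq_existsb => i; apply: eq_existsb => j; rewrite !ffunE.
rewrite eG eH.
apply/existsP/andP => [[t /and4P [a b c d]]|[/andP [c d] /existsP [t /andP [a b]]]].
- by split; [rewrite c d | apply/existsP; exists t; rewrite a eF].
- by exists t; rewrite a -eF b c d.
Qed.

Definition PS (p : G * G) :=
  [|| P1p p.1 && Qp p.2, R0p p.1 && R1p p.2 | Qp p.1 && P3p p.2].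

Lemma Q_both g i : Qp g -> both (g i) -> False.
Proof. by case/andP => /forallP /(_ i) d _ b; exact: both_dif b d. Qed.

Lemma Q_P1 g : Qp g -> P1p g -> False.
Proof.
move=> q /existsP [t /andP [_ /forallP /(_ t) /andP [/implyP /(_ (leqnn _)) b _]]].
exact: Q_both q b.
Qed.
Lemma Q_P3 g : Qp g -> P3p g -> False.
Proof.
move=> q /existsP [t /andP [_ /forallP /(_ t) /andP [/implyP /(_ (leqnn _)) b _]]].
exact: Q_both q b.
Qed.
Lemma Q_R0 g : Qp g -> R0p g -> False.
Proof.
by move=> q /forallP /(_ ord_max) /andP [/implyP /(_ (eqxx _)) b _]; exact: Q_both q b.
Qed.
Lemma Q_R1 g : Qp g -> R1p g -> False.
Proof.
by move=> q /forallP /(_ ord0) /andP [/implyP /(_ (eqxx _)) b _]; exact: Q_both q b.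
Qed.

Lemma cardS : #|S N| = 5 * 4 ^ (N - 1) + 4 - 2 ^ (N + 2).
Proof.
have E : [set sp B | B in S N] = [set p | PS p].
  apply/setP => p; rewrite [in RHS]inE.
  apply/imsetP/idP => [[B BS ->]|h].
  - by move: BS; rewrite inE /PS /= inS1E inS2E inS3E.
  - exists (unsp p); last by rewrite sp_unsp.
    by rewrite inE inS1E inS2E inS3E; move: h; rewrite -{1}(sp_unsp p) /PS.
have -> : #|S N| = #|[set p | PS p]| by rewrite -E (card_imset _ sp_inj).
pose A1 := [set g : G | P1p g]; pose AQ := [set g : G | Qp g].
pose A0 := [set g : G | R0p g]; pose A1' := [set g : G | R1p g].
pose A3 := [set g : G | P3p g].
have -> : [set p | PS p] = setX A1 AQ :|: setX A0 A1' :|: setX AQ A3.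
  by apply/setP => [[g g']]; rewrite !inE /PS /= orbA.
have d1 : setX A1 AQ :&: setX A0 A1' = set0.
  apply/setP => [[g g']]; rewrite !inE /=; apply/negbTE/negP => /andP [/andP [_ q] /andP [_ r]].
  exact: Q_R1 q r.
have d2 : (setX A1 AQ :|: setX A0 A1') :&: setX AQ A3 = set0.
  apply/setP => [[g g']]; rewrite !inE /=; apply/negbTE/negP => /andP [/orP [/andP [p q]|/andP [r _]] /andP [q' _]].
  + exact: Q_P1 q' p.
  + exact: Q_R0 q' r.
rewrite cardsU d2 cards0 subn0 cardsU d1 cards0 subn0 !cardsX.
rewrite /A1 /AQ /A0 /A1' /A3 cardP1 cardQ cardR0 cardR1 cardP3.
have x1 : 0 < 2 ^ m by rewrite expn_gt0.
rewrite (_ : N - 1 = m); last by rewrite subn1.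
rewrite (_ : 4 ^ m = 2 ^ m * 2 ^ m); last by rewrite -expnMn.
rewrite (_ : 2 ^ (N + 2) = 8 * 2 ^ m); last by rewrite addn2 !expnS; lia.
rewrite expnS.
move: x1; set x := 2 ^ m; move=> x1.
nia.
Qed.

End Cnt.

Unset Implicit Arguments.
Local Open Scope ring_scope.

Theorem corollary1 (R : realType) (n : nat) (gamma : 'I_n -> R) :
  (0 < n)%N ->
  (forall i j : 'I_n, (i < j)%N -> gamma i < gamma j) ->
  num_vertex_classes_is gamma (5 * 4 ^ (n - 1) + 4 - 2 ^ (n + 2))%N /\
  #|S n| = (5 * 4 ^ (n - 1) + 4 - 2 ^ (n + 2))%N.
Proof.
case: n gamma => [//|m] gamma _ gm.
rewrite -cardS; split => //; exact: vertex_count gm.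
Qed.
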